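(* Let $k\geqslant 1$ be an integer and let $G$ be a chordal graph. Then $G$ is $\mathbf{W_k}$ if and only if there exists a partition of $V(G)$ into simplices such that each simplex of the partition contains at least $k$ simplicial vertices of $G$.
   Context: All graphs are finite and simple. A chordal graph is a graph with no induced cycle of length at least four. A vertex $v$ is simplicial in $G$ if its neighbourhood $N(v)$ induces a complete graph; in that case $N[v]=N(v)\cup\{v\}$ is called a simplex. For a positive integer $k$, a graph $G$ is $\mathbf{W_k}$ if for any $k$ pairwise disjoint independent sets $A_1,\dots,A_k$ of $G$ there exist $k$ pairwise disjoint maximum independent sets $S_1,\dots,S_k$ of $G$ with $A_i\subseteq S_i$ for all $i\in[k]$. *)

(* Defs.v *)
From mathcomp Require Import all_boot.
Set Implicit Arguments. Unset Strict Implicit. Unset Printing Implicit Defensive.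

Definition simple_graph (T : finType) (e : rel T) : Prop :=
  symmetric e /\ irreflexive e.

Section Graph.
Variables (T : finType) (e : rel T).

Definition nbhd (v : T) : {set T} := [set u | e v u].
Definition cnbhd (v : T) : {set T} := v |: nbhd v.

Definition clique (A : {set T}) : bool :=
  [forall x in A, forall y in A, (x != y) ==> e x y].

Definition simplicial (v : T) : bool := clique (nbhd v).

Definition simplex (A : {set T}) : bool :=
  [exists v, simplicial v && (A == cnbhd v)].

Definition independent (A : {set T}) : bool :=
  [forall x in A, forall y in A, ~~ e x y].

Definition max_independent (S : {set T}) : bool :=
  independent S && [forall A : {set T}, independent A ==> (#|A| <= #|S|)].

Definition induced_cycle (c : seq T) : bool :=
  uniq c && (4 <= size c) &&
  [forall i : 'I_(size c), forall j : 'I_(size c),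
     e (tnth (in_tuple c) i) (tnth (in_tuple c) j) ==
     ((j == (i.+1 %% size c) :> nat) || (i == (j.+1 %% size c) :> nat))].

Definition chordal : Prop := forall c : seq T, ~~ induced_cycle c.

Definition W_ (k : nat) : Prop :=
  forall A : 'I_k -> {set T},
    (forall i, independent (A i)) ->
    (forall i j, i != j -> [disjoint A i & A j]) ->
    exists S : 'I_k -> {set T},
      [/\ forall i, max_independent (S i),
          forall i j, i != j -> [disjoint S i & S j] &
          forall i, A i \subset S i].

End Graph.

(* Main.v *)
Require Import Defs.
From Stdlib Require Import Classical.
From mathcomp Require Import all_boot zify.
Set Implicit Arguments. Unset Strict Implicit. Unset Printing Implicit Defensive.


Ltac nlia := repeat (match goal with H : is_true (_ && _) |- _ => case/andP: H => ? ? end);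
  repeat (match goal with H : is_true ?b |- _ =>
   lazymatch b with | leq _ _ => fail | _ => clear H end end); lia.

Section Main.
Variables (T : finType) (e : rel T).
Hypothesis esym : symmetric e.
Hypothesis eirr : irreflexive e.
Hypothesis hch : chordal e.

Ltac solve_mod := rewrite ?modnn ?modn_small; try lia.
Ltac solve_if := repeat (case: ifP => [/eqP ?|/negbT/eqP ?]); lia.

Lemma mod_succ i m : i < m -> i.+1 %% m = if i.+1 == m then 0 else i.+1.
Proof.
move=> h; case: eqP => [->|ne]; first by rewrite modnn.
by rewrite modn_small //; lia.
Qed.

Lemma hole (a b : T) (n : nat) (f : nat -> T) :
  1 <= n -> e a b ->
  (forall i, i <= n -> f i != a) -> (forall i, i <= n -> f i != b) ->
  (forall i j, i < j <= n -> f i != f j) ->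
  e a (f 0) -> e b (f n) ->
  (forall i, 0 < i <= n -> ~~ e a (f i)) ->
  (forall i, i < n -> ~~ e b (f i)) ->
  (forall i j, i <= n -> j <= n -> e (f i) (f j) = (j == i.+1) || (i == j.+1)) ->
  False.
Proof.
move=> n1 eab fa fb finj ea0 ebn ea eb ef.
pose c := a :: rcons (mkseq f n.+1) b.
have E : forall i, nth a c i.+1 = nth a (rcons (mkseq f n.+1) b) i by [].
have sc : size c = n.+3.
  by rewrite (_ : size c = (size (rcons (mkseq f n.+1) b)).+1) // size_rcons size_mkseq.
have c0 : nth a c 0 = a by [].
have cm : forall i, i <= n -> nth a c i.+1 = f i.
  by move=> i hi; rewrite E nth_rcons size_mkseq ltnS hi nth_mkseq.
have cl : nth a c n.+2 = b.
  by rewrite E nth_rcons size_mkseq ltnn eqxx.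
have ab : a != b by apply: contraTneq eab => ->; rewrite eirr.
have cases : forall i, i < n.+3 -> [\/ i = 0, (exists2 i', i' <= n & i = i'.+1) | i = n.+2].
  move=> [|i] hi; first by constructor 1.
  case: (ltnP i n.+1) => h; first by constructor 2; exists i.
  by constructor 3; lia.
apply: (negP (hch c)).
rewrite /induced_cycle; apply/andP; split; first (apply/andP; split).
- rewrite /c cons_uniq rcons_uniq; apply/andP; split.
    rewrite mem_rcons in_cons negb_or ab /=.
    apply/negP => /mapP [i]; rewrite mem_iota => /andP [_ hi] eq.
    by move: (fa i); rewrite -eq eqxx; move=> /(_ ltac:(lia)).
  apply/andP; split.
    apply/negP => /mapP [i]; rewrite mem_iota => /andP [_ hi] eq.
    by move: (fb i); rewrite -eq eqxx; move=> /(_ ltac:(lia)).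
  rewrite map_inj_in_uniq ?iota_uniq // => i j; rewrite !mem_iota => /andP [_ hi] /andP [_ hj] eq.
  case: (ltngtP i j) => // h.
    by move: (finj i j); rewrite eq eqxx; move=> /(_ ltac:(lia)).
  by move: (finj j i); rewrite eq eqxx; move=> /(_ ltac:(lia)).
- by rewrite sc.
apply/forallP => i; apply/forallP => j.
rewrite !(tnth_nth a).
have tc : (in_tuple c : seq T) = c by [].
rewrite tc.
have hi := ltn_ord i; have hj := ltn_ord j.
move: (nat_of_ord i) (nat_of_ord j) hi hj => {i j} i j.
rewrite sc => hi hj.
apply/eqP.
case: (cases i hi) => [->|[i' hi' ->]|->]; case: (cases j hj) => [->|[j' hj' ->]|->].
- by rewrite c0 eirr.
- rewrite c0 cm //; case: j' hj' => [|j'] hj'; first by rewrite ea0.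
  by rewrite (negbTE (ea j'.+1 _)) //; solve_mod.
- rewrite c0 cl eab /=; solve_mod.
- rewrite c0 cm // esym; case: i' hi' => [|i'] hi'; first by rewrite ea0 /=.
  rewrite (negbTE (ea i'.+1 _)); solve_mod.
- rewrite !cm // ef //; solve_mod.
- rewrite cm // cl esym; case: (ltnP i' n) => h.
    rewrite (negbTE (eb i' h)); solve_mod.
  have -> : i' = n by lia.
  rewrite ebn; solve_mod.
- rewrite cl c0 esym eab; solve_mod.
- rewrite cl cm // ; case: (ltnP j' n) => h.
    rewrite (negbTE (eb j' h)); solve_mod.
  have -> : j' = n by lia.
  rewrite ebn; solve_mod.
- rewrite cl eirr; solve_mod.
Qed.


Definition walk (W : {set T}) (x : T) (f : nat -> T) (n : nat) :=
  [/\ f 0 = x, forall i, i < n -> e (f i) (f i.+1) & forall i, i <= n -> f i \in W].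

Lemma walk_skip W x f n i d : walk W x f n -> i + d <= n ->
  (i + d < n -> e (f i) (f (i + d).+1)) -> (i + d = n -> f i = f n) ->
  exists g, walk W x g (n - d) /\ g (n - d) = f n.
Proof.
move=> [f0 fe fW] hid H1 H2.
exists (fun l => if l <= i then f l else f (l + d)); split; last first.
  case: ifP => h; last by congr f; lia.
  have E : i + d = n by lia.
  by rewrite -H2 //; congr f; lia.
split.
- by rewrite leq0n.
- move=> l hl /=; case: (ltngtP l i) => h.
  + apply: fe; lia.
  + rewrite addSn; apply: fe; lia.
  + subst l; rewrite addSn; apply: H1; lia.
- move=> l hl; case: ifP => h; apply: fW; lia.
Qed.

Lemma shortest W x (P : T -> bool) :
  (exists n f, walk W x f n /\ P (f n)) ->
  exists n f, [/\ walk W x f n, P (f n) &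
     forall m g, walk W x g m -> P (g m) -> n <= m].
Proof.
move=> [n0 [f0 [w0 p0]]].
suff: forall N n f, n <= N -> walk W x f n -> P (f n) -> exists n f, [/\ walk W x f n, P (f n) &
     forall m g, walk W x g m -> P (g m) -> n <= m].
  by move=> /(_ n0 n0 f0 (leqnn _) w0 p0).
elim=> [|N IH] n f hn w p.
  exists n, f; split => // m g _ _; lia.
case: (classic (exists m g, [/\ walk W x g m, P (g m) & m < n])).
  move=> [m [g [wg pg hm]]]; apply: (IH m g) => //; lia.
move=> hno; exists n, f; split => // m g wg pg.
case: (leqP n m) => // hm; case: hno; by exists m, g.
Qed.

Lemma shortest_props W x (P : T -> bool) n f :
  walk W x f n -> P (f n) -> (forall m g, walk W x g m -> P (g m) -> n <= m) ->
  [/\ forall i, i < n -> ~~ P (f i),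
      forall i j, i < j <= n -> f i != f j &
      forall i j, i <= n -> j <= n -> e (f i) (f j) = (j == i.+1) || (i == j.+1)].
Proof.
move=> w pn hmin.
have [f0 fe fW] := w.
have ha : forall i, i < n -> ~~ P (f i).
  move=> i hi; apply/negP => pi.
  have wi : walk W x f i by split => // l hl; [apply: fe | apply: fW]; lia.
  by move: (hmin i f wi pi); lia.
split => //.
- move=> i j /andP [hij hjn]; apply/negP => /eqP fij.
  have [g [wg gn]] := walk_skip (i := i) (d := j - i) w ltac:(lia)
     (fun h => ltac:(rewrite fij (_ : i + (j - i) = j); [apply: fe; lia | lia]))
     (fun h => ltac:(rewrite fij; congr f; lia)).
  by move: (hmin _ g wg); rewrite gn => /(_ pn); lia.
- have nochord : forall i j, i.+1 < j <= n -> ~~ e (f i) (f j).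
    move=> i j /andP [hij hjn]; apply/negP => eij.
    have [g [wg gn]] := walk_skip (i := i) (d := j - i.+1) w ltac:(lia)
     (fun h => ltac:(rewrite (_ : (i + (j - i.+1)).+1 = j) //; lia))
     (fun h => ltac:(lia)).
    by move: (hmin _ g wg); rewrite gn => /(_ pn); lia.
  move=> i j hi hj.
  case: (ltngtP i j) => h.
  + case: (eqVneq j i.+1) => [->|ne]; first by rewrite fe //; lia.
    rewrite (negbTE (nochord i j _)) /=; lia.
  + case: (eqVneq i j.+1) => [->|ne]; first by rewrite esym fe ?orbT //; lia.
    rewrite esym (negbTE (nochord j i _)) /=; lia.
  + by subst; rewrite eirr; lia.
Qed.



Lemma cliqueP (K : {set T}) x y : clique e K -> x \in K -> y \in K -> x != y -> e x y.
Proof. by move=> /forallP/(_ x)/implyP hK xK yK; move/(_ xK)/forallP/(_ y)/implyP/(_ yK)/implyP: hK. Qed.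

Lemma compC (K D : {set T}) (d0 : T) :
  clique e K -> [disjoint D & K] -> d0 \in D ->
  (forall x y, x \in D -> y \in D -> exists n f, walk D x f n /\ f n = y) ->
  exists2 d, d \in D & forall b, b \in K -> (exists2 d', d' \in D & e b d') -> e b d.
Proof.
move=> cK dDK d0D conn.
pose F x := #|[set a in K | e a x]|.
have [d dD dmax] : exists2 d, d \in D & forall y, y \in D -> F y <= F d.
  by case: (arg_maxnP F d0D) => x xD H; exists x.
exists d => // b bK [d' d'D ebd']; apply/negPn/negP => nbd.
have [n0 [f0 [w0 e0]]] := conn d d' dD d'D.
have [n [f [w pn hmin]]] := @shortest D d (e b) ltac:(exists n0, f0; by rewrite e0).
have [ha hinj hef] := shortest_props w pn hmin.
have [f0d fe fD] := w.
have n1 : 0 < n.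
  by case: (posnP n) => // nz; move: pn; rewrite nz f0d (negbTE nbd).
have fnD : f n \in D by apply: fD.
have : ~~ ([set a in K | e a d] \subset [set a in K | e a (f n)]).
  apply/negP => sub.
  have : [set a in K | e a d] \proper [set a in K | e a (f n)].
    apply/properP; split => //; exists b; rewrite !inE ?bK ?pn //.
  by move/proper_card/leq_trans/(_ (dmax _ fnD)); rewrite ltnn.
case/subsetPn => a; rewrite !inE => /andP [aK ead]; rewrite aK /= => nan.
have dk : forall x, x \in D -> x \notin K by move=> x xD; rewrite (disjointFr dDK xD).
have ex0 : exists i, (fun i => (i <= n) && e a (f i)) i by exists 0; rewrite /= f0d ead.
have ub0 : forall i, (fun i => (i <= n) && e a (f i)) i -> i <= n by move=> i /andP [].
have [i0 pi0 maxi0] := ex_maxnP ex0 ub0.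
move: pi0 => /andP [i0n eai0].
have i0lt : i0 < n by case: (ltngtP i0 n) => // h; [by rewrite ltnNge i0n in h | by move: nan; rewrite -h eai0].
have ab : a != b by apply: contraNneq nan => ->.
apply: (@hole a b (n - i0) (fun l => f (i0 + l))).
- nlia.
- exact: cliqueP cK aK bK ab.
- move=> i hi; apply: contraNneq (dk _ (fD (i0 + i) ltac:(nlia))) => ->; exact: aK.
- move=> i hi; apply: contraNneq (dk _ (fD (i0 + i) ltac:(nlia))) => ->; exact: bK.
- move=> i j hij; apply: hinj; nlia.
- by rewrite addn0.
- by rewrite (_ : i0 + (n - i0) = n) //; nlia.
- move=> i hi; apply/negP => h.
  by move: (maxi0 (i0 + i) ltac:(rewrite h andbT; nlia)); nlia.
- move=> i hi; apply: ha; nlia.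
- move=> i j hi hj; rewrite hef; [|nlia|nlia].
  by rewrite -!addnS !eqn_add2l.
Qed.


Definition restr (W : {set T}) := [rel u v | (u \in W) && (v \in W) && e u v].
Definition vcomp (W : {set T}) z := [set y | connect (restr W) z y].

Lemma restr_sym (W : {set T}) : symmetric (restr W).
Proof. by move=> u v; rewrite /restr /= esym; case: (u \in W); case: (v \in W). Qed.

Lemma restr_csym (W : {set T}) : connect_sym (restr W).
Proof. exact: sym_connect_sym (restr_sym W). Qed.

Lemma connect_walk (W : {set T}) (x y : T) : connect (restr W) x y -> x \in W ->
  exists n f, walk W x f n /\ f n = y.
Proof.
move=> /connectP [p pp ->] xW.
exists (size p), (fun i => nth x (x :: p) i); split; last by rewrite (last_nth x).
have hp := pathP x pp.
split => //.
- by move=> i hi; move: (hp i hi) => /andP [].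
- move=> [|i] hi //; by move: (hp i hi) => /andP [/andP []].
Qed.

Lemma walk_connect (W : {set T}) x f n : walk W x f n -> forall i, i <= n -> connect (restr W) x (f i).
Proof.
move=> [f0 fe fW]; elim=> [|i IH] hi; first by rewrite f0 connect0.
apply: connect_trans (IH (ltnW hi)) (connect1 _).
by rewrite /= !fW ?fe // ltnW.
Qed.

Lemma comp_sub (W : {set T}) (z : T) : z \in W -> vcomp W z \subset W.
Proof.
move=> zW; apply/subsetP => y; rewrite inE => /connect_walk/(_ zW) [n [f [[f0 fe fW] <-]]].
exact: fW.
Qed.

Lemma comp_self (W : {set T}) (z : T) : z \in vcomp W z.
Proof. by rewrite inE connect0. Qed.

Lemma comp_eq (W : {set T}) (z y : T) : y \in vcomp W z -> vcomp W y = vcomp W z.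
Proof.
rewrite inE => zy; apply/setP => u; rewrite !inE; apply/idP/idP => h.
  exact: connect_trans zy h.
by apply: connect_trans h; rewrite restr_csym.
Qed.

Lemma comp_edge (W : {set T}) (z x u : T) : x \in vcomp W z -> x \in W -> u \in W -> e x u -> u \in vcomp W z.
Proof.
rewrite !inE => zx xW uW exu; apply: connect_trans zx (connect1 _); by rewrite /= xW uW.
Qed.

Lemma comp_conn (W : {set T}) (z x y : T) : z \in W -> x \in vcomp W z -> y \in vcomp W z ->
  exists n f, walk (vcomp W z) x f n /\ f n = y.
Proof.
move=> zW xc yc.
have xW : x \in W by apply: (subsetP (comp_sub zW)).
have xy : connect (restr W) x y.
  by move: xc yc; rewrite !inE => zx zy; apply: connect_trans zy; rewrite restr_csym.
have [n [f [w fn]]] := connect_walk xy xW.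
exists n, f; split => //; have [f0 fe fW] := w; split => // i hi.
by rewrite -(comp_eq xc) inE (walk_connect w hi).
Qed.

Lemma dominate (U K : {set T}) : K \subset U -> clique e K ->
  (forall k, k \in K -> exists2 u, u \in U :\: K & e k u) ->
  exists X : {set T}, [/\ X \subset U :\: K, independent e X & forall k, k \in K -> exists2 x, x \in X & e k x].
Proof.
move=> KU cK hK.
pose W := U :\: K.
pose good (D : {set T}) d := [forall b in K, [exists d' in D, e b d'] ==> e b d].
pose rep (D : {set T}) := [pick d in D | good D d].
have hrep : forall z, z \in W -> exists d, [/\ rep (vcomp W z) = Some d, d \in vcomp W z & good (vcomp W z) d].
  move=> z zW; rewrite /rep; case: pickP => [d /andP [h1 h2]|none]; first by exists d.
  have dis : [disjoint vcomp W z & K].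
    rewrite disjoint_subset; apply/subsetP => x /(subsetP (comp_sub zW)); rewrite !inE => /andP [xK _] //.
  have [d dD hd] := compC cK dis (comp_self W z) (fun x y => comp_conn zW).
  move: (none d); rewrite dD /=; move/negbT/negP; case.
  apply/forallP => b; apply/implyP => bK; apply/implyP => /existsP [d' /andP [d'D ebd']].
  by apply: hd => //; exists d'.
pose X := [set d | [exists z in W, rep (vcomp W z) == Some d]].
have XW : X \subset W.
  apply/subsetP => d; rewrite inE => /existsP [z /andP [zW /eqP hz]].
  have [d' [h1 h2 _]] := hrep z zW; rewrite hz in h1; case: h1 => ->.
  exact: (subsetP (comp_sub zW)).
exists X; split => //.
- apply/forallP => x; apply/implyP => xX; apply/forallP => y; apply/implyP => yX.
  apply/negP => exy.
  move: (xX) (yX); rewrite !inE => /existsP [z1 /andP [z1W /eqP h1]] /existsP [z2 /andP [z2W /eqP h2]].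
  have [x' [hx1 xc _]] := hrep z1 z1W; rewrite h1 in hx1; case: hx1 => ex; subst x'.
  have [y' [hy1 yc _]] := hrep z2 z2W; rewrite h2 in hy1; case: hy1 => ey; subst y'.
  have yc1 : y \in vcomp W z1 by apply: (comp_edge xc) => //; apply: (subsetP XW).
  have ceq : vcomp W z1 = vcomp W z2 by rewrite -(comp_eq yc1) (comp_eq yc).
  by move: h1; rewrite ceq h2 => -[exy']; rewrite exy' eirr in exy.
- move=> k kK; have [u uW eku] := hK k kK.
  have [d [h1 dc gd]] := hrep u uW.
  exists d; first by rewrite inE; apply/existsP; exists u; rewrite uW h1 eqxx.
  move: gd => /forallP/(_ k)/implyP/(_ kK)/implyP; apply.
  by apply/existsP; exists u; rewrite comp_self eku.
Qed.


Definition NU (U : {set T}) v := [set u in U | e v u].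
Definition simpU (U : {set T}) v := clique e (NU U v).

Lemma cliqueI (A : {set T}) : (forall x y, x \in A -> y \in A -> x != y -> e x y) -> clique e A.
Proof.
move=> h; apply/forallP => x; apply/implyP => xA; apply/forallP => y; apply/implyP => yA.
by apply/implyP; apply: h.
Qed.

Lemma clique_sub (A B : {set T}) : A \subset B -> clique e B -> clique e A.
Proof.
move=> AB cB; apply: cliqueI => x y xA yA ne; apply: (cliqueP cB) => //; exact: (subsetP AB).
Qed.

Lemma dirac_gen m (U K : {set T}) : #|U| + #|U :\: K| <= m -> K \subset U -> clique e K ->
  ~~ (U \subset K) -> exists w, [/\ w \in U, w \notin K & simpU U w].
Proof.
elim: m U K => [|m IH] U K hm KU cK nUK.
  have U0 : #|U| = 0 by nlia.
  by move: nUK; rewrite (cards0_eq U0) sub0set.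
case/subsetPn: (nUK) => z zU zK.
pose W := U :\: K.
have zW : z \in W by rewrite !inE zK zU.
pose D := vcomp W z.
pose M := [set k in K | [exists d in D, e k d]].
pose U' := D :|: M.
have DW : D \subset W := comp_sub zW.
have WU : W \subset U by apply: subsetDl.
have MK : M \subset K by apply/subsetP => k; rewrite inE => /andP [].
have U'U : U' \subset U.
  by rewrite subUset (subset_trans DW WU) (subset_trans MK KU).
have DnK : forall x, x \in D -> x \notin K.
  by move=> x /(subsetP DW); rewrite inE => /andP [].
case: (eqVneq U' U) => hU'; last first.
  have pU : U' \proper U by rewrite properEneq hU' U'U.
  have c1 := proper_card pU.
  have c2 : #|U' :\: M| <= #|W|.
    apply: subset_leq_card; apply: (subset_trans _ DW); apply/subsetP => x.
    by rewrite !inE => /andP [xM /orP [xD|xM']] //; rewrite xM' in xM.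
  have zD : z \in D by apply: comp_self.
  have nU'M : ~~ (U' \subset M).
    apply/subsetPn; exists z; first by rewrite inE zD.
    by rewrite inE (negbTE zK).
  have hm' : #|U'| + #|U' :\: M| <= m by rewrite /W in c2; nlia.
  have [w [wU' wM sw]] := IH U' M hm' (subsetUr _ _) (clique_sub MK cK) nU'M.
  have wD : w \in D by move: wU'; rewrite inE (negbTE wM) orbF.
  exists w; split; first exact: (subsetP U'U).
    exact: DnK.
  suff E : NU U w = NU U' w by rewrite /simpU E.
  apply/setP => u; rewrite !inE; apply/andP/andP => [[uU ewu]|[uU' ewu]]; split => //.
    case: (boolP (u \in K)) => uK.
      apply/orP; right; rewrite /=; apply/existsP; exists w; by rewrite wD esym.
    apply/orP; left.
    have : u \in D.
      apply: (comp_edge wD) => //; first exact: (subsetP DW).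
      by rewrite inE uK uU.
    by rewrite inE.
  by apply: (subsetP U'U); rewrite inE !inE.
have dis : [disjoint D & K].
  by rewrite disjoint_subset; apply/subsetP => x /DnK; rewrite inE.
have [d dD hd] := compC cK dis (comp_self W z) (fun x y => comp_conn zW).
have kd : forall k, k \in K -> e k d.
  move=> k kK; apply: hd => //.
  have : k \in U' by rewrite hU'; exact: (subsetP KU).
  rewrite inE => /orP [kD|]; first by rewrite (negbTE (DnK _ kD)) in kK.
  by rewrite inE => /andP [_ /existsP [d' /andP [d'D ekd']]]; exists d'.
have dU : d \in U by apply: (subsetP WU); apply: (subsetP DW).
have dK := DnK d dD.
pose K' := d |: K.
have cK' : clique e K'.
  apply: cliqueI => x y; rewrite !inE => /orP [/eqP ->|xK] /orP [/eqP ->|yK] ne.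
  - by rewrite eqxx in ne.
  - by rewrite esym kd.
  - by rewrite kd.
  - exact: cliqueP cK xK yK ne.
have K'U : K' \subset U by rewrite subUset sub1set dU KU.
case: (boolP (U \subset K')) => hUK'.
  exists d; split => //.
  apply: (clique_sub _ cK); apply/subsetP => u; rewrite inE => /andP [uU edu].
  move: (subsetP hUK' u uU); rewrite !inE => /orP [/eqP eud|] //.
  by rewrite eud eirr in edu.
have pr : U :\: K' \proper U :\: K.
  apply/properP; split; first by apply: setDS; apply: subsetUr.
  by exists d; rewrite !inE ?eqxx ?dK ?dU.
have hm' : #|U| + #|U :\: K'| <= m by move: (proper_card pr); nlia.
have [w [wU wK' sw]] := IH U K' hm' K'U cK' hUK'.
exists w; split => //; apply: contra wK'; rewrite inE => ->; exact: orbT.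
Qed.

Lemma dirac0 (U : {set T}) x : x \in U -> exists w, w \in U /\ simpU U w.
Proof.
move=> xU.
have c0 : clique e set0 by apply: cliqueI => y z; rewrite inE.
have nU : ~~ (U \subset set0) by apply/subsetPn; exists x; rewrite ?inE.
have [w [wU _ sw]] := @dirac_gen (#|U| + #|U :\: set0|) U set0 (leqnn _) (sub0set _) c0 nU.
by exists w.
Qed.

Definition CNU (U : {set T}) v := v |: NU U v.

Definition WC (U : {set T}) := forall I : {set T}, I \subset U -> independent e I ->
  exists J : {set T}, [/\ I \subset J, J \subset U, independent e J &
    forall I' : {set T}, I' \subset U -> independent e I' -> #|I'| <= #|J|].

Lemma indepP (A : {set T}) x y : independent e A -> x \in A -> y \in A -> ~~ e x y.
Proof. by move=> /forallP/(_ x)/implyP hA xA yA; move/(_ xA)/forallP/(_ y)/implyP/(_ yA): hA. Qed.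

Lemma indepI (A : {set T}) : (forall x y, x \in A -> y \in A -> ~~ e x y) -> independent e A.
Proof.
move=> h; apply/forallP => x; apply/implyP => xA; apply/forallP => y; apply/implyP => yA.
exact: h.
Qed.

Lemma indep_sub (A B : {set T}) : A \subset B -> independent e B -> independent e A.
Proof. move=> AB iB; apply: indepI => x y xA yA; apply: (indepP iB); exact: (subsetP AB). Qed.

Lemma clique_CNU (U : {set T}) v : simpU U v -> clique e (CNU U v).
Proof.
move=> sv; apply: cliqueI => x y; rewrite !inE => /orP [/eqP ->|/andP [xU evx]] /orP [/eqP ->|/andP [yU evy]] ne.
- by rewrite eqxx in ne.
- exact: evy.
- by rewrite esym.
- by apply: (cliqueP sv) => //; rewrite inE ?xU ?yU ?evx ?evy.
Qed.

Lemma CNU_sub (U : {set T}) v : v \in U -> CNU U v \subset U.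
Proof. by move=> vU; apply/subsetP => x; rewrite !inE => /orP [/eqP ->|/andP []]. Qed.

Lemma SS_sub (U : {set T}) w1 w2 : w1 \in U -> w2 \in U -> simpU U w1 -> e w1 w2 ->
  CNU U w1 \subset CNU U w2.
Proof.
move=> w1U w2U s1 e12; apply/subsetP => u; rewrite !inE => /orP [/eqP ->|/andP [uU e1u]].
  by rewrite w1U esym e12 orbT.
case: (eqVneq u w2) => [->|ne] //=.
rewrite uU /= esym.
by apply: (cliqueP s1) => //; rewrite inE ?uU ?w2U.
Qed.

Lemma SS (U : {set T}) w1 w2 : w1 \in U -> w2 \in U -> simpU U w1 -> simpU U w2 -> e w1 w2 ->
  CNU U w1 = CNU U w2.
Proof.
move=> w1U w2U s1 s2 e12; apply/eqP; rewrite eqEsubset !SS_sub //.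
by rewrite esym.
Qed.

Lemma indep_le_cover (J : {set T}) (F : {set {set T}}) : independent e J ->
  (forall B, B \in F -> clique e B) -> (forall j, j \in J -> exists2 B, B \in F & j \in B) ->
  #|J| <= #|F|.
Proof.
move=> iJ cF cov.
pose pb j := odflt set0 [pick B in F | j \in B].
have pbP : forall j, j \in J -> pb j \in F /\ j \in pb j.
  move=> j jJ; rewrite /pb; case: pickP => [B /andP [h1 h2]|none] //.
  have [B BF jB] := cov j jJ; by move: (none B); rewrite BF jB.
have inj : {in J &, injective pb}.
  move=> j1 j2 j1J j2J E; apply/eqP; apply/negPn/negP => ne.
  have [h1 h2] := pbP j1 j1J; have [h3 h4] := pbP j2 j2J.
  rewrite E in h1 h2.
  by move: (indepP iJ j1J j2J); rewrite (cliqueP (cF _ h1) h2 h4 ne).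
rewrite -(card_in_imset inj); apply: subset_leq_card; apply/subsetP => B /imsetP [j jJ ->].
by case: (pbP j jJ).
Qed.

Lemma WC_del (U : {set T}) v : WC U -> v \in U -> simpU U v -> WC (U :\: CNU U v).
Proof.
move=> wc vU sv I IU' iI.
have IU : I \subset U by apply: (subset_trans IU'); apply: subsetDl.
have nvI : forall i, i \in I -> ~~ e v i /\ i != v.
  move=> i /(subsetP IU'); rewrite !inE negb_or => /andP [/andP [iv /nandP h] iU].
  by split => //; case: h => [/negP|]; [rewrite iU|].
have iIv : independent e (v |: I).
  apply: indepI => x y; rewrite !inE => /orP [/eqP ->|xI] /orP [/eqP ->|yI].
  - by rewrite eirr.
  - by case: (nvI y yI).
  - by rewrite esym; case: (nvI x xI).
  - exact: (indepP iI).
have [J [vIJ JU iJ maxJ]] := wc (v |: I) ltac:(by rewrite subUset sub1set vU IU) iIv.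
have vJ : v \in J by apply: (subsetP vIJ); rewrite !inE eqxx.
exists (J :\: CNU U v); split.
- apply/subsetP => i hi; rewrite inE (subsetP vIJ) ?andbT; last by rewrite inE hi orbT.
  by move: (subsetP IU' i hi); rewrite inE => /andP [].
- by apply: setSD.
- by apply: (indep_sub _ iJ); apply: subsetDl.
- move=> I' I'U' iI'.
  have nvI' : forall i, i \in I' -> ~~ e v i /\ i != v.
    move=> i /(subsetP I'U'); rewrite !inE negb_or => /andP [/andP [iv /nandP h] iU].
    by split => //; case: h => [/negP|]; [rewrite iU|].
  have iI'v : independent e (v |: I').
    apply: indepI => x y; rewrite !inE => /orP [/eqP ->|xI] /orP [/eqP ->|yI].
    - by rewrite eirr.
    - by case: (nvI' y yI).
    - by rewrite esym; case: (nvI' x xI).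
    - exact: (indepP iI').
  have I'U : I' \subset U by apply: (subset_trans I'U'); apply: subsetDl.
  have h1 := maxJ (v |: I') ltac:(by rewrite subUset sub1set vU I'U) iI'v.
  have vI' : v \notin I' by apply/negP => /nvI' [_]; rewrite eqxx.
  rewrite cardsU1 vI' in h1.
  have h2 : #|J :&: CNU U v| <= 1.
    rewrite (_ : J :&: CNU U v = [set v]) ?cards1 //.
    apply/setP => u; rewrite !inE; apply/andP/eqP => [[uJ /orP [/eqP //|/andP [_ evu]]]|->].
      by move: (indepP iJ vJ uJ); rewrite evu.
    by rewrite vJ eqxx.
  move: (cardsID (CNU U v) J) => h3.
  nlia.
Qed.

Lemma cover_thm n (U : {set T}) : #|U| <= n -> WC U ->
  forall x, x \in U -> exists w, [/\ w \in U, simpU U w & x \in CNU U w].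
Proof.
elim: n U => [|n IH] U hn wc x xU.
  by move: xU; rewrite (cards0_eq (_ : #|U| = 0)) ?inE //; nlia.
have [v [vU sv]] := dirac0 xU.
pose U' := U :\: CNU U v.
have wc' := WC_del wc vU sv.
have U'U : U' \subset U by apply: subsetDl.
have pU : U' \proper U.
  apply/properP; split => //; exists v => //; by rewrite !inE eqxx.
have hn' : #|U'| <= n by move: (proper_card pU); nlia.
have IH' := IH U' hn' wc'.
case: (boolP (x \in CNU U v)) => xv; first by exists v.
have xU' : x \in U' by rewrite inE xv xU.
have [w' [w'U' sw' xC]] := IH' x xU'.
pose C := CNU U' w'.
have cC : clique e C := clique_CNU sw'.
have CU' : C \subset U' := CNU_sub w'U'.
have CU : C \subset U := subset_trans CU' U'U.
case: (boolP [exists c in C, NU U c \subset C]).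
  move=> /existsP [c /andP [cC' NC]].
  have cU : c \in U := subsetP CU c cC'.
  exists c; split => //; first exact: clique_sub NC cC.
  rewrite !inE; case: (eqVneq x c) => [->|ne] //=.
  by rewrite (subsetP U'U x xU') (cliqueP cC cC' xC) // eq_sym.
move=> nex.
have hdom : forall c, c \in C -> exists2 u, u \in U :\: C & e c u.
  move=> c cC'; have : ~~ (NU U c \subset C).
    by apply: contra nex => h; apply/existsP; exists c; rewrite cC' h.
  case/subsetPn => u; rewrite inE => /andP [uU ecu] uC; exists u => //.
  by rewrite inE uC uU.
have [X [XUC iX domX]] := dominate CU cC hdom.
have XU : X \subset U by apply: (subset_trans XUC); apply: subsetDl.
have [J [XJ JU iJ maxJ]] := wc X XU iX.
have JC : forall j, j \in J -> j \notin C.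
  move=> j jJ; apply/negP => jC; have [y yX ejy] := domX j jC.
  by move: (indepP iJ jJ (subsetP XJ y yX)); rewrite ejy.
exfalso.
pose P' := [set CNU U' w | w in [set w in U' | simpU U' w]].
have CP : C \in P' by apply/imsetP; exists w'; rewrite // inE w'U' sw'.
pose F := CNU U v |: (P' :\ C).
have ub : #|J| <= #|F|.
  apply: indep_le_cover => //.
    move=> B; rewrite !inE => /orP [/eqP ->|/andP [_ /imsetP [w wS ->]]]; first exact: clique_CNU.
    by move: wS; rewrite inE => /andP [_ sw]; apply: clique_CNU sw.
  move=> j jJ; have jU := subsetP JU j jJ.
  case: (boolP (j \in CNU U v)) => jv; first by exists (CNU U v); rewrite // !inE eqxx.
  have jU' : j \in U' by rewrite inE jv jU.
  have [wj [wjU' swj jC]] := IH' j jU'.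
  exists (CNU U' wj) => //.
  rewrite !inE; apply/orP; right; apply/andP; split.
    by apply/negP => /eqP E; move: (JC j jJ); rewrite -E jC.
  by apply/imsetP; exists wj; rewrite // inE wjU' swj.
have fP : #|F| <= #|P'|.
  rewrite /F cardsU1 (cardsD1 C P') CP.
  by case: (_ \notin _) => //=; apply: leqnSn.
pose rep B := odflt v [pick w in U' | simpU U' w && (CNU U' w == B)].
have repP : forall B, B \in P' -> [/\ rep B \in U', simpU U' (rep B) & CNU U' (rep B) = B].
  move=> B /imsetP [w wS ->]; rewrite /rep; case: pickP => [w0 /andP [h1 /andP [h2 /eqP h3]]|none] //.
  by move: wS; rewrite inE => /andP [wU sw]; move: (none w); rewrite wU sw eqxx.
have repinj : {in P' &, injective rep}.
  move=> B1 B2 h1 h2 E; have [_ _ <-] := repP B1 h1; have [_ _ <-] := repP B2 h2; by rewrite E.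
pose R := [set rep B | B in P'].
have cR : #|R| = #|P'| by apply: card_in_imset.
have RU' : R \subset U' by apply/subsetP => r /imsetP [B BP ->]; case: (repP B BP).
have vR : v \notin R by apply/negP => /(subsetP RU'); rewrite !inE eqxx.
have nvR : forall b, b \in R -> ~~ e v b.
  move=> b bR; move: (subsetP RU' b bR); rewrite !inE negb_or => /andP [/andP [_ /nandP h] bU].
  by case: h => [/negP|//]; rewrite bU.
have iI0 : independent e (v |: R).
  apply: indepI => a b; rewrite !inE => /orP [/eqP ->|aR] /orP [/eqP ->|bR].
  - by rewrite eirr.
  - exact: nvR.
  - by rewrite esym; apply: nvR.
  - move: aR bR => /imsetP [B1 B1P ->] /imsetP [B2 B2P ->].
    have [r1U s1 c1] := repP B1 B1P; have [r2U s2 c2] := repP B2 B2P.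
    apply/negP => ee.
    have E : B1 = B2 by rewrite -c1 -c2; apply: SS.
    by move: ee; rewrite E eirr.
have I0U : v |: R \subset U by rewrite subUset sub1set vU (subset_trans RU' U'U).
have lb := maxJ (v |: R) I0U iI0.
rewrite cardsU1 vR cR in lb.
move: (leq_trans lb (leq_trans ub fP)); rewrite add1n ltnn.
done.
Qed.

Lemma NU_T v : NU [set: T] v = nbhd e v.
Proof. by apply/setP => u; rewrite !inE. Qed.

Lemma simpT v : simplicial e v = simpU [set: T] v.
Proof. by rewrite /simplicial /simpU NU_T. Qed.

Lemma cnbhdT v : cnbhd e v = CNU [set: T] v.
Proof. by rewrite /cnbhd /CNU NU_T. Qed.

Lemma disj0s (B : {set T}) : [disjoint set0 & B].
Proof. by rewrite -setI_eq0 set0I. Qed.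

Lemma disjs0 (B : {set T}) : [disjoint B & set0].
Proof. by rewrite -setI_eq0 setI0. Qed.

Lemma simp_block w x : simplicial e w -> simplicial e x -> x \in cnbhd e w -> cnbhd e x = cnbhd e w.
Proof.
rewrite !simpT !cnbhdT => sw sx; rewrite !inE => /orP [/eqP ->//|/andP [_ ewx]].
by apply: SS; rewrite ?inE // esym.
Qed.

Lemma W_WC k : 0 < k -> W_ e k -> WC [set: T].
Proof.
move=> hk hW I _ iI.
pose i0 : 'I_k := Ordinal hk.
pose A (i : 'I_k) := if i == i0 then I else set0.
have iA : forall i, independent e (A i).
  by move=> i; rewrite /A; case: ifP => // _; apply: indepI => x y; rewrite inE.
have dA : forall i j, i != j -> [disjoint A i & A j].
  move=> i j ne; rewrite /A; case: (eqVneq i i0) => [ei|_]; last exact: disj0s.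
  by case: (eqVneq j i0) => [ej|_]; [by rewrite ei ej eqxx in ne | exact: disjs0].
have [S [hmax _ hsub]] := hW A iA dA.
exists (S i0); split => //.
- by move: (hsub i0); rewrite /A eqxx.
- by case/andP: (hmax i0).
- move=> I' _ iI'; case/andP: (hmax i0) => _ /forallP/(_ I')/implyP; exact.
Qed.

Lemma forward k : 0 < k -> W_ e k ->
  exists P : {set {set T}},
     [/\ partition P [set: T],
         forall B, B \in P -> simplex e B &
         forall B, B \in P -> k <= #|[set v in B | simplicial e v]| ].
Proof.
move=> hk hW.
have wc := W_WC hk hW.
have cov := @cover_thm #|[set: T]| [set: T] (leqnn _) wc.
pose P := [set cnbhd e w | w in [set w | simplicial e w]].
exists P; split.
- apply/and3P; split.
  + apply/eqP/setP => x; rewrite inE; apply/bigcupP.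
    have [w [_ sw xw]] := cov x (in_setT x).
    exists (cnbhd e w); last by rewrite cnbhdT.
    by apply/imsetP; exists w; rewrite // inE simpT.
  + apply/trivIsetP => B1 B2 /imsetP [a aS ->] /imsetP [b bS ->] ne.
    move: aS bS; rewrite !inE => sa sb.
    have memC : forall u v, u \in cnbhd e v -> u = v \/ e v u.
      by move=> u v; rewrite /cnbhd !inE => /orP [/eqP|]; [left|right].
    have nab : ~~ e a b.
      apply/negP => eab; move: ne; rewrite !cnbhdT (SS _ _ _ _ eab) ?eqxx // -simpT //.
    case: (eqVneq a b) => [eab'|ab]; first by rewrite eab' eqxx in ne.
    rewrite -setI_eq0; apply/eqP/setP => x; rewrite in_set0 in_setI; apply/negP => /andP [xa xb].
    have xa' : x != a.
      apply/negP => /eqP exa; subst x; case: (memC _ _ xb) => [eq|eba].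
        by rewrite eq eqxx in ab.
      by rewrite esym eba in nab.
    have xb' : x != b.
      apply/negP => /eqP exb; subst x; case: (memC _ _ xa) => [eq|eab].
        by rewrite eq eqxx in ab.
      by rewrite eab in nab.
    have eax : e a x by case: (memC _ _ xa) => // exa; rewrite exa eqxx in xa'.
    have ebx : e b x by case: (memC _ _ xb) => // exb; rewrite exb eqxx in xb'.
    have ix : independent e [set x] by apply: indepI => y z; rewrite !inE => /eqP -> /eqP ->; rewrite eirr.
    have [J [xJ _ iJ maxJ]] := wc [set x] (subsetT _) ix.
    have xJ' : x \in J by apply: (subsetP xJ); rewrite inE.
    have aJ : a \notin J by apply/negP => aJ; move: (indepP iJ aJ xJ'); rewrite eax.
    have bJ : b \notin J by apply/negP => bJ; move: (indepP iJ bJ xJ'); rewrite ebx.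
    have nay : forall c y, simplicial e c -> e c x -> y \in J -> y != x -> ~~ e c y.
      move=> c y sc ecx yJ yx; apply/negP => ecy.
      have := cliqueP sc (_ : x \in nbhd e c) (_ : y \in nbhd e c); rewrite !inE eq_sym => /(_ ecx ecy yx) exy.
      by move: (indepP iJ xJ' yJ); rewrite exy.
    pose J' := a |: (b |: (J :\ x)).
    have iJ' : independent e J'.
      apply: indepI => y z; rewrite !inE.
      move=> /orP [/eqP ->|/orP [/eqP ->|/andP [yx yJ]]] /orP [/eqP ->|/orP [/eqP ->|/andP [zx zJ]]].
      - by rewrite eirr.
      - exact: nab.
      - exact: nay.
      - by rewrite esym.
      - by rewrite eirr.
      - exact: nay.
      - by rewrite esym; apply: nay.
      - by rewrite esym; apply: nay.
      - exact: (indepP iJ).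
    have := maxJ J' (subsetT _) iJ'.
    have anb : a \notin b |: (J :\ x) by rewrite !inE negb_or ab /= negb_and aJ orbT.
    have bnJ : b \notin J :\ x by rewrite !inE negb_and bJ orbT.
    rewrite /J' cardsU1 anb cardsU1 bnJ (cardsD1 x J) xJ' /=.
    by rewrite !add1n ltnn.
  + apply/negP => /imsetP [w _ E].
    by move: (setU11 w (nbhd e w)); rewrite -[w |: _]/(cnbhd e w) -E inE.
- move=> B /imsetP [w wS ->]; apply/existsP; exists w; rewrite eqxx andbT.
  by move: wS; rewrite inE.
move=> B /imsetP [w wS ->]; move: wS; rewrite inE => sw.
pose SB := [set v in cnbhd e w | simplicial e v].
rewrite leqNgt; apply/negP => hlt.
have cB : clique e (cnbhd e w) by rewrite cnbhdT; apply: clique_CNU; rewrite -simpT.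
pose N' := cnbhd e w :\: SB.
pose U := ~: SB.
have N'U : N' \subset U.
  by apply/subsetP => y; rewrite !inE => /andP [/negbTE -> _].
have cN' : clique e N' by apply: clique_sub cB; apply: subsetDl.
have SBB : SB \subset cnbhd e w by apply/subsetP => y; rewrite inE => /andP [].
have hN' : forall y, y \in N' -> exists2 u, u \in U :\: N' & e y u.
  move=> y; rewrite !inE => /andP [ny yB]; rewrite yB /= in ny.
  have : ~~ (nbhd e y \subset cnbhd e w) by apply: contra ny => h; apply: clique_sub h cB.
  case/subsetPn => u; rewrite inE => eyu uB; exists u => //.
  by move: uB; rewrite !inE => /negbTE ->.
have [X [XU iX domX]] := dominate N'U cN' hN'.
have XB : forall x, x \in X -> x \notin cnbhd e w.
  move=> x xX; apply/negP => xB; move: (subsetP XU x xX).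
  by rewrite !in_setD in_setC xB andbT negbK; case: (x \in SB).
pose s := enum SB.
have ss : size s = #|SB| by rewrite cardE.
pose A (i : 'I_k) := if i < #|SB| then [set nth w s i] else if i == #|SB| :> nat then X else set0.
have iA : forall i, independent e (A i).
  move=> i; rewrite /A; case: ifP => _.
    by apply: indepI => y z; rewrite !inE => /eqP -> /eqP ->; rewrite eirr.
  by case: ifP => _ //; apply: indepI => y z; rewrite inE.
have nthB : forall i, i < #|SB| -> nth w s i \in cnbhd e w.
  by move=> i hi; apply: (subsetP SBB); rewrite -mem_enum mem_nth // ss.
have dA : forall i j, i != j -> [disjoint A i & A j].
  move=> i j ne; rewrite -setI_eq0; apply/eqP/setP => x; rewrite in_set0 in_setI.
  apply/negP => /andP [xi xj].
  have key : forall l : 'I_k, x \in A l -> (l < #|SB| /\ x = nth w s l) \/ (val l = #|SB| /\ x \in X).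
    move=> l; rewrite /A; case: ifP => h; first by rewrite inE => /eqP ->; left.
    case: ifP => h2; last by rewrite inE.
    by move=> xX; right; split => //; apply/eqP.
  case: (key i xi) => [[hi ei]|[hi ei]]; case: (key j xj) => [[hj ej]|[hj ej]].
    have hi' : i < size s by rewrite ss.
    have hj' : j < size s by rewrite ss.
    move: (nth_uniq w hi' hj' (enum_uniq SB)); rewrite -ei -ej eqxx => ij.
    by move: ne; rewrite -val_eqE /= -ij.
  - by move: (XB x ej); rewrite ei nthB.
  - by move: (XB x ei); rewrite ej nthB.
  - by move: ne; rewrite -val_eqE /= hi hj eqxx.
have [S [hmax hdisj hsub]] := hW A iA dA.
pose it : 'I_k := Ordinal hlt.
have XS : X \subset S it by move: (hsub it); rewrite /A /= ltnn eqxx.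
have [iS mS] := andP (hmax it).
have [y yS yB] : exists2 y, y \in S it & y \in cnbhd e w.
  case: (boolP [exists y in S it, y \in cnbhd e w]) => [/existsP [y /andP [h1 h2]]|none].
    by exists y.
  have wS : w \notin S it.
    apply: contra none => wS; apply/existsP; exists w; rewrite wS /=.
    by rewrite /cnbhd !inE eqxx.
  have iwS : independent e (w |: S it).
    have nw : forall z, z \in S it -> ~~ e w z.
      move=> z zS; apply/negP => ewz; move: none; apply/negP/negPn/existsP; exists z.
      by rewrite zS /cnbhd !inE ewz orbT.
    apply: indepI => a b; rewrite !inE => /orP [/eqP ->|aS] /orP [/eqP ->|bS].
    - by rewrite eirr.
    - exact: nw.
    - by rewrite esym; apply: nw.
    - exact: (indepP iS).
  move: mS => /forallP/(_ (w |: S it))/implyP/(_ iwS).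
  by rewrite cardsU1 wS add1n ltnn.
have yN' : y \notin N'.
  apply/negP => yN; have [x xX eyx] := domX y yN.
  by move: (indepP iS yS (subsetP XS x xX)); rewrite eyx.
have ySB : y \in SB by move: yN'; rewrite in_setD yB andbT negbK.
have ys : y \in s by rewrite mem_enum.
have hi : index y s < #|SB| by rewrite -ss index_mem.
pose io : 'I_k := Ordinal (ltn_trans hi hlt).
have yio : y \in S io.
  apply: (subsetP (hsub io)); rewrite /A /= hi inE nth_index //.
have ne : io != it by rewrite -val_eqE /= neq_ltn hi.
by move: (disjointFr (hdisj io it ne) yio); rewrite yS.
Qed.

Lemma injex k (M : {set 'I_k}) (Av : {set T}) (x0 : T) : #|M| <= #|Av| ->
  exists f : {ffun 'I_k -> T},
    [forall i in M, f i \in Av] && [forall i in M, forall j in M, (f i == f j) ==> (i == j)].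
Proof.
move=> hc.
pose s := enum Av; pose sM := enum M.
have idx : forall i, i \in M -> index i sM < size s.
  move=> i iM; rewrite -cardE; apply: leq_trans hc; rewrite cardE index_mem mem_enum //.
exists [ffun i => nth x0 s (index i sM)]; apply/andP; split.
  apply/forallP => i; apply/implyP => iM; rewrite ffunE.
  by rewrite -mem_enum mem_nth // idx.
apply/forallP => i; apply/implyP => iM; apply/forallP => j; apply/implyP => jM.
rewrite !ffunE (nth_uniq x0 (idx i iM) (idx j jM) (enum_uniq Av)); apply/implyP => /eqP E.
have iM' : i \in sM by rewrite mem_enum.
have jM' : j \in sM by rewrite mem_enum.
by rewrite -(nth_index i iM') E (nth_index i jM').
Qed.

Lemma backward k (P : {set {set T}}) : partition P [set: T] ->
  (forall B, B \in P -> simplex e B) ->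
  (forall B, B \in P -> k <= #|[set v in B | simplicial e v]|) -> W_ e k.
Proof.
move=> hP hS hk A iA dA.
move: hP => /and3P [/eqP cov triv n0].
have tri := trivIsetP triv.
have blockP : forall x, exists2 B, B \in P & x \in B.
  by move=> x; move: (in_setT x); rewrite -cov => /bigcupP [B BP xB]; exists B.
have BF : forall B, B \in P -> exists2 w, simplicial e w & B = cnbhd e w.
  by move=> B /hS /existsP [w /andP [sw /eqP ->]]; exists w.
have cliqueB : forall B, B \in P -> clique e B.
  by move=> B /BF [w sw ->]; rewrite cnbhdT; apply: clique_CNU; rewrite -simpT.
have simp_nb : forall B x u, B \in P -> x \in B -> simplicial e x -> e x u -> u \in B.
  move=> B x u /BF [w sw ->] xB sx exu; rewrite -(simp_block sw sx xB).
  by rewrite /cnbhd !inE exu orbT.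
have same : forall B1 B2 x, B1 \in P -> B2 \in P -> x \in B1 -> x \in B2 -> B1 = B2.
  move=> B1 B2 x h1 h2 x1 x2; apply/eqP; apply/negPn/negP => ne.
  by move: (disjointFr (tri _ _ h1 h2 ne) x1); rewrite x2.
case: (pickP (fun _ : T => true)) => [x0 _|T0]; last first.
  exists (fun _ => set0); split.
  - move=> i; apply/andP; split; first by apply: indepI => y z; rewrite inE.
    apply/forallP => I; apply/implyP => _; rewrite cards0 leqn0 cards_eq0; apply/eqP/setP => x.
    by move: (T0 x).
  - by move=> i j _; apply: disj0s.
  - by move=> i; apply/subsetP => x; move: (T0 x).
pose MB (B : {set T}) := [set i | [disjoint A i & B]].
pose AvB (B : {set T}) := [set x in B | simplicial e x && [forall j, x \notin A j]].
have count : forall B, B \in P -> #|MB B| <= #|AvB B|.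
  move=> B BP.
  pose SB := [set x in B | simplicial e x].
  pose BA := [set x in B | [exists j, x \in A j]].
  have h1 : #|MB B| + #|~: MB B| = k by rewrite cardsC card_ord.
  have h2 : #|SB| <= #|AvB B| + #|BA|.
    apply: leq_trans (_ : #|AvB B :|: BA| <= _); last by rewrite cardsU leq_subr.
    apply: subset_leq_card; apply/subsetP => x; rewrite !inE => /andP [xB sx].
    rewrite xB sx /=; case: (boolP [forall j, x \notin A j]) => //= /forallPn [j].
    by rewrite negbK => xj; apply/existsP; exists j.
  have h3 : #|BA| <= #|~: MB B|.
    case: (set_0Vmem BA) => [->|[x0' xBA0]]; first by rewrite cards0.
    move: xBA0; rewrite inE => /andP [_ /existsP [j0 _]].
    pose f x := odflt j0 [pick j | x \in A j].
    have fP : forall x, x \in BA -> x \in A (f x).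
      move=> x; rewrite inE => /andP [_ /existsP [j xj]]; rewrite /f.
      by case: pickP => [j' //|none]; rewrite none in xj.
    have finj : {in BA &, injective f}.
      move=> x y xBA yBA E; apply/eqP; apply/negPn/negP => ne.
      have xy := fP x xBA; have yy := fP y yBA; rewrite E in xy.
      move: xBA yBA; rewrite !inE => /andP [xB _] /andP [yB _].
      by move: (indepP (iA (f y)) xy yy); rewrite (cliqueP (cliqueB B BP) xB yB ne).
    rewrite -(card_in_imset finj); apply: subset_leq_card; apply/subsetP => j /imsetP [x xBA ->].
    rewrite !inE -setI_eq0; apply/set0Pn; exists x; rewrite in_setI fP //.
    by move: xBA; rewrite inE => /andP [].
  have h4 := hk B BP.
  rewrite -/SB in h4.
  nlia.
pose good B (f : {ffun 'I_k -> T}) :=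
  [forall i in MB B, f i \in AvB B] && [forall i in MB B, forall j in MB B, (f i == f j) ==> (i == j)].
pose fB B := odflt [ffun=> x0] [pick f | good B f].
have fBP : forall B, B \in P -> good B (fB B).
  move=> B BP; rewrite /fB; case: pickP => [f //|none].
  have [f hf] := injex x0 (count B BP); by move: (none f); rewrite /good hf.
have fBin : forall B i, B \in P -> i \in MB B -> fB B i \in AvB B.
  by move=> B i BP iM; move: (fBP B BP) => /andP [/forallP /(_ i) /implyP /(_ iM)].
have fBinj : forall B i j, B \in P -> i \in MB B -> j \in MB B -> fB B i = fB B j -> i = j.
  move=> B i j BP iM jM E; move: (fBP B BP) => /andP [_ /forallP /(_ i) /implyP /(_ iM)].
  by move/forallP/(_ j)/implyP/(_ jM); rewrite E eqxx => /implyP /(_ isT) /eqP.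
pose add i := [set x | [exists B in P, (i \in MB B) && (x == fB B i)]].
have addP : forall i x, x \in add i -> exists B, [/\ B \in P, i \in MB B & x = fB B i].
  by move=> i x; rewrite inE => /existsP [B /andP [BP /andP [iM /eqP ->]]]; exists B.
have AvP : forall B x, x \in AvB B -> [/\ x \in B, simplicial e x & forall j, x \notin A j].
  move=> B x; rewrite inE => /andP [xB /andP [sx /forallP h]]; split => //.
pose S i := A i :|: add i.
have iS : forall i, independent e (S i).
  move=> i; apply: indepI.
  have mixed : forall a b, a \in A i -> b \in add i -> ~~ e a b.
    move=> a b ai /addP [B [BP iM ->]]; have [bB sb _] := AvP _ _ (fBin B i BP iM).
    apply/negP => eab; have aB : a \in B by apply: (simp_nb B (fB B i) a BP bB sb); rewrite esym.
    move: iM; rewrite inE => /disjointFr /(_ ai); by rewrite aB.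
  move=> a b; rewrite !in_setU => /orP [ai|aa] /orP [bi|ba].
  - exact: (indepP (iA i)).
  - exact: mixed.
  - by rewrite esym; apply: mixed.
  - move: (addP i a aa) (addP i b ba) => [B1 [B1P i1 ->]] [B2 [B2P i2 ->]].
    have [aB sa _] := AvP _ _ (fBin B1 i B1P i1).
    have [bB sb _] := AvP _ _ (fBin B2 i B2P i2).
    apply/negP => eab; have bB1 := simp_nb B1 _ _ B1P aB sa eab.
    move: eab; rewrite (same B1 B2 _ B1P B2P bB1 bB) eirr //.
have meets : forall i B, B \in P -> exists2 x, x \in S i & x \in B.
  move=> i B BP; case: (boolP (i \in MB B)) => iM.
    by have [xB _ _] := AvP _ _ (fBin B i BP iM); exists (fB B i) => //; rewrite in_setU inE; apply/orP; right; apply/existsP; exists B; rewrite BP iM eqxx.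
  move: iM; rewrite inE -setI_eq0 => /set0Pn [x]; rewrite in_setI => /andP [xA xB].
  by exists x => //; rewrite in_setU xA.
have PS : forall i, #|P| <= #|S i|.
  move=> i; apply: leq_trans (leq_imset_card (pblock P) (S i)); apply: subset_leq_card.
  apply/subsetP => B BP; have [x xS xB] := meets i B BP.
  by apply/imsetP; exists x => //; rewrite (def_pblock triv BP xB).
exists S; split.
- move=> i; apply/andP; split; first exact: iS.
  apply/forallP => I; apply/implyP => iI; apply: leq_trans (PS i).
  apply: indep_le_cover => // j _; exact: blockP.
- move=> i j ne; rewrite -setI_eq0; apply/eqP/setP => x; rewrite in_set0 in_setI !in_setU.
  apply/negP => /andP [/orP [xi|xi] /orP [xj|xj]].
  + by move: (disjointFr (dA i j ne) xi); rewrite xj.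
  + have [B [BP jM E]] := addP j x xj; have [_ _ h] := AvP _ _ (fBin B j BP jM).
    by move: (h i); rewrite -E xi.
  + have [B [BP iM E]] := addP i x xi; have [_ _ h] := AvP _ _ (fBin B i BP iM).
    by move: (h j); rewrite -E xj.
  + have [B1 [B1P iM E1]] := addP i x xi; have [B2 [B2P jM E2]] := addP j x xj.
    have [xB1 _ _] := AvP _ _ (fBin B1 i B1P iM); rewrite -E1 in xB1.
    have [xB2 _ _] := AvP _ _ (fBin B2 j B2P jM); rewrite -E2 in xB2.
    have E := same B1 B2 x B1P B2P xB1 xB2; subst B2.
    have fe : fB B1 i = fB B1 j by rewrite -E1 -E2.
    by move: ne; rewrite (fBinj B1 i j B1P iM jM fe) eqxx.
- by move=> i; apply: subsetUl.
Qed.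

End Main.

Theorem proposition1 (T : finType) (e : rel T) (k : nat) :
  simple_graph e -> 1 <= k -> chordal e ->
  (W_ e k <->
   exists P : {set {set T}},
     [/\ partition P [set: T],
         forall B, B \in P -> simplex e B &
         forall B, B \in P -> k <= #|[set v in B | simplicial e v]| ]).
Proof.
move=> [esym eirr] hk hch; split.
- exact: forward esym eirr hch k hk.
- by move=> [P [hP hS hk']]; exact: backward esym eirr k P hP hS hk'.
Qed.
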